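(* Let $w$ be a function on pairs $(T,S)$ of equal-size subsets of $[n]$ with values in $\mathbb{R}\cup\{-\infty\}$ satisfying properties (i)–(v) below, such that $F(S)=w(\{1,\dots,|S|\},S)$ is submodular. Then $w(j,k)\ge w(j+1,k)$ for all $j,k$ with $1\le j<n$ and $1\le k\le n$.
   Context: Notation: $w(i,j)=w(\{i\},\{j\})$; $Ss=S\cup\{s\}$; an interval is a set of consecutive integers. For $S,T\in\binom{[n]}{k}$, $T=\{t_1<\dots<t_k\}$, $S\preceq T$ means $|\{s\in S:s\le t_j\}|\ge j$ for all $j$; $S\prec T$ means $S\preceq T$, $S\ne T$. Properties: (i) $w(\{1,\dots,|S|\},S)\ne-\infty$ for all $S$. (ii) $w(T,S)=-\infty$ whenever $S\prec T$. (iii) For any interval $I$ with $\max(I)<\min(T\cup S)$, $w(I\cup T,I\cup S)=\sum_{i\in I}w(i,i)+w(T,S)$. (iv) If $t,s>\max(S\cup T)$ then $w(Tt,Ss)=w(T,S)+w(t,s)$. (v) For fixed $S$, $|S|=k$, and any $R$ with $|R|=k-2$ and distinct $a,b,c,d\notin R$, the maximum of $w(R\cup\{a,b\},S)+w(R\cup\{c,d\},S)$, $w(R\cup\{a,c\},S)+w(R\cup\{b,d\},S)$, $w(R\cup\{a,d\},S)+w(R\cup\{b,c\},S)$ is attained at least twice. Submodular: $F(A\cap B)+F(A\cup B)\le F(A)+F(B)$. *)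

(* Defs.v *)
From HB Require Import structures.
From mathcomp Require Import all_boot all_order all_algebra.
From mathcomp Require Import constructive_ereal.
Set Implicit Arguments. Unset Strict Implicit. Unset Printing Implicit Defensive.
Import Order.TTheory GRing.Theory Num.Theory.

(* Convention: the ground set [n] = {1,...,n} is represented by 'I_n,
   the ordinal i standing for the integer  lab i = i + 1. *)
Definition lab n (i : 'I_n) : nat := (val i).+1.

(* the singleton {x} of [n], for an integer label x (empty if x not in [n]) *)
Definition pt n (x : nat) : {set 'I_n} := [set i : 'I_n | lab i == x].

Definition init n (m : nat) : {set 'I_n} := [set i : 'I_n | lab i <= m].

Definition labs n (T : {set 'I_n}) : seq nat := sort leq [seq lab i | i in T].

Definition tj n (T : {set 'I_n}) (j : nat) : nat := nth 0 (labs T) j.-1.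

Definition preceq n (S T : {set 'I_n}) : Prop :=
  forall j, 1 <= j <= #|T| -> j <= #|[set s in S | lab s <= tj T j]|.

Definition prec n (S T : {set 'I_n}) : Prop := preceq S T /\ S <> T.

Definition is_interval n (I : {set 'I_n}) : Prop :=
  exists a b : nat, I = [set i : 'I_n | a <= lab i < b].

Local Open Scope ereal_scope.

Definition max_twice (R : realDomainType) (x y z : \bar R) : Prop :=
  (x = y /\ z <= x) \/ (x = z /\ y <= x) \/ (y = z /\ x <= y).

Definition Fw (R : realDomainType) n (w : {set 'I_n} -> {set 'I_n} -> \bar R)
  (S : {set 'I_n}) : \bar R := w (init n #|S|) S.

Definition submodular (R : realDomainType) n (F : {set 'I_n} -> \bar R) : Prop :=
  forall A B : {set 'I_n}, F (A :&: B) + F (A :|: B) <= F A + F B.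

(* values in R ∪ {-oo} on pairs of equal-size subsets *)
Definition no_pinfty (R : realDomainType) n (w : {set 'I_n} -> {set 'I_n} -> \bar R) :=
  forall T S : {set 'I_n}, #|T| = #|S| -> w T S <> +oo.

Definition prop_i (R : realDomainType) n (w : {set 'I_n} -> {set 'I_n} -> \bar R) :=
  forall S : {set 'I_n}, w (init n #|S|) S <> -oo.

Definition prop_ii (R : realDomainType) n (w : {set 'I_n} -> {set 'I_n} -> \bar R) :=
  forall T S : {set 'I_n}, #|T| = #|S| -> prec S T -> w T S = -oo.

Definition prop_iii (R : realDomainType) n (w : {set 'I_n} -> {set 'I_n} -> \bar R) :=
  forall I T S : {set 'I_n}, #|T| = #|S| -> is_interval I ->
    (forall i x, i \in I -> x \in T :|: S -> (lab i < lab x)%N) ->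
    w (I :|: T) (I :|: S) = \sum_(i in I) w [set i] [set i] + w T S.

Definition prop_iv (R : realDomainType) n (w : {set 'I_n} -> {set 'I_n} -> \bar R) :=
  forall (T S : {set 'I_n}) (t s : 'I_n), #|T| = #|S| ->
    (forall x, x \in S :|: T -> (lab x < lab t)%N) ->
    (forall x, x \in S :|: T -> (lab x < lab s)%N) ->
    w (t |: T) (s |: S) = w T S + w [set t] [set s].

Definition prop_v (R : realDomainType) n (w : {set 'I_n} -> {set 'I_n} -> \bar R) :=
  forall (S R0 : {set 'I_n}) (a b c d : 'I_n),
    (2 <= #|S|)%N -> #|R0| = (#|S| - 2)%N ->
    uniq [:: a; b; c; d] ->
    a \notin R0 -> b \notin R0 -> c \notin R0 -> d \notin R0 ->
    max_twice (w (R0 :|: [set a; b]) S + w (R0 :|: [set c; d]) S)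
              (w (R0 :|: [set a; c]) S + w (R0 :|: [set b; d]) S)
              (w (R0 :|: [set a; d]) S + w (R0 :|: [set b; c]) S).

(* Main.v *)
Require Import Defs.
From HB Require Import structures.
From mathcomp Require Import all_boot all_order all_algebra.
From mathcomp Require Import constructive_ereal.
From mathcomp Require Import zify lra.
Import Order.TTheory GRing.Theory Num.Theory.
Local Open Scope ereal_scope.

Lemma pt_set1 n x (h : (x.-1 < n)%N) : (0 < x)%N -> pt n x = [set Ordinal h].
Proof.
move=> x0; apply/setP => i; rewrite !inE /lab.
apply/eqP/eqP => [H|->]; last exact: (prednK x0).
apply: val_inj; change (val i = x.-1); move: H => /=; lia.
Qed.
Arguments pt_set1 {n x}.

Lemma card_pt n x : (0 < x <= n)%N -> #|pt n x| = 1%N.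
Proof.
move=> /andP[x0 xn]; have h : (x.-1 < n)%N by lia.
by rewrite (pt_set1 h x0) cards1.
Qed.

Lemma card_initU n m x : (m < x <= n)%N -> #|init n m| = m ->
  #|init n m :|: pt n x| = m.+1.
Proof.
move=> /andP[mx xn] cm; have h : (x.-1 < n)%N by lia.
rewrite (pt_set1 h) ?(leq_ltn_trans _ mx) // setUC cardsU1 cm.
have -> : Ordinal h \notin init n m by rewrite inE /lab /=; lia.
by [].
Qed.

Lemma init_S n m : init n m.+1 = init n m :|: pt n m.+1.
Proof. apply/setP => i; rewrite !inE /lab; lia. Qed.

Lemma card_init n m : (m <= n)%N -> #|init n m| = m.
Proof.
elim: m => [|m IH] mn.
  apply/eqP; rewrite cards_eq0; apply/eqP/setP => i; rewrite !inE /lab; lia.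
have IH' : #|init n m| = m by apply: IH; lia.
by rewrite init_S card_initU // ltnSn mn.
Qed.

Lemma init_interval n m : is_interval (init n m).
Proof. exists 0%N, m.+1; apply/setP => i; by rewrite !inE. Qed.

Theorem lemma6p3 (R : realDomainType) (n : nat)
  (w : {set 'I_n} -> {set 'I_n} -> \bar R) :
  no_pinfty w -> prop_i w -> prop_ii w -> prop_iii w -> prop_iv w -> prop_v w ->
  submodular (Fw w) ->
  forall j k : nat, (1 <= j < n)%N -> (1 <= k <= n)%N ->
    w (pt n j.+1) (pt n k) <= w (pt n j) (pt n k).
Proof.
move=> hp hi hii hiii _ _ hsub j k /andP[j1 jn] /andP[k1 kn].
have c1 : #|pt n j.+1| = 1%N by apply: card_pt; lia.
have c2 : #|pt n k| = 1%N by apply: card_pt; lia.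
have c3 : #|pt n j| = 1%N by apply: card_pt; lia.
case: (leqP k j) => kj.
  rewrite hii; [exact: leNye | by rewrite c1 c2 |].
  have hk : (k.-1 < n)%N by lia.
  have hj : (j < n)%N by lia.
  rewrite (pt_set1 hk) //; rewrite (pt_set1 (x:=j.+1) hj) //; rewrite /prec /preceq; split.
    move=> jj; rewrite cards1 => /andP[? ?].
    have -> : jj = 1%N by lia.
    rewrite /tj /labs /=.
    have -> : [seq lab i | i in [set Ordinal hj]] = [:: j.+1].
      by rewrite /image_mem enum_set1.
    rewrite /= card_gt0; apply/set0Pn; exists (Ordinal hk).
    rewrite !inE eqxx /lab /=; lia.
  move/setP => /(_ (Ordinal hk)); rewrite !inE eqxx => /esym/eqP [] /=; lia.
case: j j1 jn kj c1 c3 => [//|j'] _ jn kj c1 c3.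
set I0 := init n j'. set I1 := init n j'.+1.
have cI0 : #|I0| = j' by apply: card_init; lia.
have cI1 : #|I1| = j'.+1 by apply: card_init; lia.
have cB : #|I0 :|: pt n k| = j'.+1 by apply: card_initU => //; lia.
have cU : #|I1 :|: pt n k| = j'.+2 by apply: card_initU => //; lia.
have EI : I1 :&: (I0 :|: pt n k) = I0.
  apply/setP => i; rewrite !inE /lab; lia.
have EU : I1 :|: (I0 :|: pt n k) = I1 :|: pt n k.
  apply/setP => i; rewrite !inE /lab; lia.
have := hsub I1 (I0 :|: pt n k); rewrite EI EU /Fw cI0 cI1 cB cU.
have i0 : forall m, w (init n m) (init n m) =
    \sum_(i in init n m) w [set i] [set i] + w set0 set0.
  move=> m; rewrite -(hiii (init n m) set0 set0) ?setU0 ?cards0 //.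
    exact: init_interval.
  by move=> i x _; rewrite !inE.
have eB : w (init n j'.+1) (I0 :|: pt n k) =
    \sum_(i in I0) w [set i] [set i] + w (pt n j'.+1) (pt n k).
  rewrite init_S hiii; [done | by rewrite c3 c2 | exact: init_interval |].
  by move=> i x; rewrite !inE /lab => ? /orP[] /eqP; lia.
have eU : w (init n j'.+2) (I1 :|: pt n k) =
    \sum_(i in I1) w [set i] [set i] + w (pt n j'.+2) (pt n k).
  rewrite init_S hiii; [done | by rewrite c1 c2 | exact: init_interval |].
  by move=> i x; rewrite !inE /lab => ? /orP[] /eqP; lia.
rewrite eB eU !i0 -/I0 -/I1.
have F0 := hi I0; have F1 := hi I1.
have G0 : w I0 I0 <> +oo by apply: hp.
have G1 : w I1 I1 <> +oo by apply: hp.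
rewrite /Fw cI0 i0 in F0; rewrite /Fw cI1 i0 in F1.
rewrite i0 in G0; rewrite i0 in G1.
have P0 : w set0 set0 <> +oo by apply: hp; rewrite cards0.
have Px := hp _ _ (etrans c1 (esym c2)).
have Py := hp _ _ (etrans c3 (esym c2)).
move: F0 F1 G0 G1 P0 Px Py.
set s1 := \sum_(i in I0) _. set s2 := \sum_(i in I1) _.
set c := w set0 set0. set x := w (pt n j'.+2) (pt n k).
set y := w (pt n j'.+1) (pt n k).
case: s1 => [r1| |]; case: s2 => [r2| |]; case: c => [rc| |];
 case: x => [rx| |]; case: y => [ry| |];
 move=> H1 H2 H3 H4 H5 H6 H7 H; try exact: leNye;
 try by exfalso; first [apply: H1|apply: H2|apply: H3|apply: H4|apply: H5|apply: H6|apply: H7].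
move: H; rewrite -!EFinD lee_fin => H; rewrite lee_fin; lra.
Qed.
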